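(* Let $m\ge1$, and for $k=1,\dots,m$ let $0<\lambda_k\le1$, $A_k\ge0$, $p_k\ge1$. Suppose $f\in C^1([0,\infty))$ and $g_k\in L^{p_k}_{loc}([0,\infty))$ satisfy $f\ge0$, $g_k\ge0$, \[ f'(t)\le\sum_{k=1}^m f(t)^{1-\lambda_k}g_k(t),\qquad \|g_k\|_{L^{p_k}([0,t])}\lesssim\langle t\rangle^{A_k} \] for all $t\ge0$. Then $f(t)\lesssim\langle t\rangle^{\Gamma}$ for all $t\ge0$, where $\Gamma=\max_{1\le k\le m}\frac{A_k+1/p_k'}{\lambda_k}$.
   Context: $\langle t\rangle=(1+|t|^2)^{1/2}$; $p_k'$ is the Hölder conjugate exponent of $p_k$ ($1/p_k+1/p_k'=1$). Implicit constants are independent of $t$. *)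

(* Defs.v *)
From HB Require Import structures.
From mathcomp Require Import all_boot all_order all_algebra.
From mathcomp Require Import all_classical all_reals all_analysis.
Set Implicit Arguments. Unset Strict Implicit. Unset Printing Implicit Defensive.
Import Order.TTheory GRing.Theory Num.Theory.
Import numFieldNormedType.Exports.
Local Open Scope ring_scope.
Local Open Scope classical_set_scope.

Definition jbr {R : realType} (t : R) : R := Num.sqrt (1 + `|t| ^+ 2).

Definition LpNorm0t {R : realType} (p : R) (g : R -> R) (t : R) : \bar R :=
  Lnorm (@lebesgue_measure R) (p%:E) (fun x => (\1_(`[0, t]%classic) x * g x)%:E).

(* Hoelder conjugate reciprocal 1/p' = 1 - 1/p (= 0 when p = 1, i.e. p' = oo) *)
Definition inv_conj {R : realType} (p : R) : R := 1 - p^-1.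

Definition C1_halfline {R : realType} (f f' : R -> R) : Prop :=
  (forall t : R, 0 < t -> is_derive t 1 f (f' t)) /\
  (h^-1 * (f h - f 0) @[h --> (0:R)^'+] --> f' 0) /\
  {within `[0, +oo[, continuous f'}.

(* Main.v *)
Require Import Defs.
From HB Require Import structures.
From mathcomp Require Import all_boot all_order all_algebra.
From mathcomp Require Import all_classical all_reals all_analysis.
From mathcomp Require Import ring lra.
Import Order.TTheory GRing.Theory Num.Theory.
Import numFieldNormedType.Exports.
Local Open Scope ring_scope.
Local Open Scope classical_set_scope.

Section Alg.
Variable R : realType.

Lemma alg_bound (m : nat) (lam b : 'I_m -> R) (X f0 : R) :
  (forall k, 0 < lam k <= 1) -> (forall k, 0 <= b k) -> 0 <= X -> 0 <= f0 ->
  X <= f0 + \sum_(k < m) X `^ (1 - lam k) * b k ->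
  X <= m.+1%:R * f0 + \sum_(k < m) (m.+1%:R * b k) `^ (lam k)^-1.
Proof.
move=> hl hb X0 f00 hX.
rewrite leNgt; apply/negP => hK.
have m1 : 0 < m.+1%:R :> R by rewrite ltr0Sn.
have S0 : 0 <= \sum_(k < m) (m.+1%:R * b k) `^ (lam k)^-1.
  by apply: sumr_ge0 => k _; exact: powR_ge0.
have Xp : 0 < X by apply: le_lt_trans hK; apply: addr_ge0 => //; apply: mulr_ge0 => //; exact: ltW.
have hf0 : f0 < X / m.+1%:R.
  rewrite ltr_pdivlMr // mulrC; apply: le_lt_trans hK; lra.
have hk : forall k, X `^ (1 - lam k) * b k <= X / m.+1%:R.
  move=> k; have /andP[l0 l1] := hl k.
  have hy : (m.+1%:R * b k) `^ (lam k)^-1 < X.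
    apply: le_lt_trans hK; rewrite -[leLHS]add0r; apply: lerD.
      by apply: mulr_ge0 => //; exact: ltW.
    rewrite (bigD1 k) //= -[leLHS]addr0; apply: lerD => //.
    by apply: sumr_ge0 => i _; exact: powR_ge0.
  have hb' : m.+1%:R * b k < X `^ lam k.
    have h1 : 0 <= m.+1%:R * b k by apply: mulr_ge0 => //; exact: ltW.
    have n1 : (m.+1%:R * b k) `^ (lam k)^-1 \in Num.nneg by rewrite nnegrE; exact: powR_ge0.
    have n2 : X \in Num.nneg by rewrite nnegrE; exact: ltW.
    have := @gt0_ltr_powR R (lam k) l0 _ X n1 n2 hy.
    by rewrite -powRrM mulVf ?gt_eqF // powRr1.
  rewrite ler_pdivlMr // -mulrA [b k * _]mulrC.
  have eX : X `^ (1 - lam k) * X `^ lam k = X.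
    rewrite -powRD; last by rewrite (gt_eqF Xp) implybT.
    by rewrite subrK powRr1 // ltW.
  rewrite -[leRHS]eX.
  apply: ler_wpM2l; [exact: powR_ge0 | exact: ltW].
have : f0 + \sum_(k < m) X `^ (1 - lam k) * b k < X.
  have hs : \sum_(k < m) X `^ (1 - lam k) * b k <= m%:R * (X / m.+1%:R).
    apply: le_trans (ler_sum _ (fun k _ => hk k)) _.
    by rewrite sumr_const card_ord mulr_natl.
  have e : X = X / m.+1%:R + m%:R * (X / m.+1%:R).
    rewrite -natr1; field; rewrite natr1 gt_eqF //.
  rewrite [ltRHS]e; exact: ltr_leD.
by rewrite ltNge hX.
Qed.
End Alg.
Section Hold.
Variable R : realType.
Local Notation mu := (@lebesgue_measure R).

Lemma int_le_holder (g : R -> R) (p t : R) : 1 <= p -> 0 <= t ->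
  measurable_fun (`[0, +oo[ : set R) g -> (forall x, 0 <= x -> 0 <= g x) ->
  (\int[mu]_(x in `[0%R, t]) (g x)%:E <= (t `^ inv_conj p)%:E * LpNorm0t p g t)%E.
Proof.
move=> p1 t0 mg g0.
set D := `[0, t] : set R.
have mD : measurable D by exact: measurable_itv.
pose F x := \1_D x * g x.
have FE : F = g \_ D.
  apply/funext => x; rewrite /F patchE indicE; case: (x \in D) => /=; rewrite ?mul1r ?mul0r //.
have mF : measurable_fun setT F.
  rewrite FE; apply/(measurable_restrictT _ mD).
  apply: measurable_funS mg => //.
  by move=> x /=; rewrite !in_itv /= => /andP[+ _]; rewrite andbT.
have intE : (\int[mu]_(x in D) (g x)%:E = Lnorm mu 1 (EFin \o F))%E.
  rewrite Lnorm1 [LHS]integral_mkcond; apply: eq_integral => x _ /=.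
  rewrite FE /= !patchE; case: ifPn => xD /=; last by rewrite normr0.
  rewrite ger0_norm //; apply: g0.
  by move: xD; rewrite inE /D /= in_itv /= => /andP[].
rewrite intE.
have [->|p1'] := eqVneq p 1.
  rewrite /inv_conj invr1 subrr powRr0 mul1e /LpNorm0t.
  by [].
have pgt1 : 1 < p by rewrite lt_neqAle eq_sym p1' p1.
have ic0 : 0 < inv_conj p by rewrite /inv_conj subr_gt0 invf_lt1 // (lt_le_trans ltr01 p1).
pose q := (inv_conj p)^-1.
have q0 : 0 < q by rewrite invr_gt0.
have pq : p^-1 + q^-1 = 1 by rewrite /q invrK /inv_conj addrC subrK.
have mI : measurable_fun setT (\1_D : R -> R) by exact: measurable_realfun.measurable_indic.
have := hoelder.hoelder mu mF mI (lt_le_trans ltr01 p1) q0 pq.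
have -> : (F \* \1_D)%R = F.
  apply/funext => x /=; rewrite /F indicE; case: (x \in D); rewrite /= ?mulr1 ?mulr0 ?mul0r //.
move/le_trans; apply.
rewrite muleC; apply: lee_wpmul2r; first exact: Lnorm_ge0.
rewrite Lnorm.unlock /=.
have -> : (\int[mu]_x `|(EFin \o \1_D) x| `^ q = \int[mu]_x (\1_D x)%:E)%E.
  apply: eq_integral => x _; rewrite /= indicE; case: (x \in D) => /=.
    by rewrite normr1 powR1.
  by rewrite -[X in `|X|]/(0:R) normr0 powR0 // gt_eqF.
rewrite integral_indic // setIT /D [X in (X `^ _)%E]lebesgue_measure_itv /=.
case: ltP => [tp|]; last first.
  rewrite poweR0r; last by rewrite invr_neq0 // gt_eqF.
  by move=> _; rewrite lee_fin powR_ge0.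
by rewrite oppr0 addr0 poweR_EFin /q invrK.
Qed.
End Hold.
Section C1.
Variable R : realType.

Lemma C1_oy (f f' : R -> R) : C1_halfline f f' -> derivable_oy_Rcontinuous f 0.
Proof.
move=> [hd [h0 hc]]; split.
  move=> x; rewrite in_itv /= andbT => x0.
  by have := hd x x0 => /(@ex_derive _ _ _ _ _ _ _).
have H1 : (fun h : R => h) @ 0^'+ --> (0:R).
  exact: cvg_at_right_filter cvg_id.
have H3 : (fun h : R => f 0 + h * (h^-1 * (f h - f 0))) @ 0^'+ --> f 0 + 0 * f' 0.
  by apply: cvgD; [exact: cvg_cst | apply: cvgM].
rewrite mul0r addr0 in H3.
apply: cvg_trans H3; apply: near_eq_cvg; near=> h.
have hp : 0 < h by near: h; exact: nbhs_right_gt.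
rewrite /= mulrA mulfV ?gt_eqF // mul1r; ring.
Unshelve. all: by end_near.
Qed.
End C1.

Section FTC.
Variable R : realType.
Local Notation mu := (@lebesgue_measure R).

Lemma ftc_le (f f' h : R -> R) (c : R) : 0 < c -> C1_halfline f f' ->
  measurable_fun (`[0, c] : set R) h -> (forall x, 0 <= x <= c -> 0 <= h x) ->
  (forall x, 0 <= x <= c -> f' x <= h x) ->
  ((f c - f 0)%:E <= \int[mu]_(x in `[0%R, c]) (h x)%:E)%E.
Proof.
move=> c0 Hf mh h0 hle.
have Hd := @C1_oy R f f' Hf.
have Hoo : derivable_oo_LRcontinuous f 0 c := derivable_oy_continuousWoo c0 (lexx 0) Hd.
case: Hf => [hd [_ hc]].
have cf' : {within `[0, c], continuous f'}.
  apply: continuous_subspaceW hc => x /=; rewrite !in_itv /= => /andP[-> _] //.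
have F'E : {in `]0, c[%R, f^`() =1 f'}.
  move=> x; rewrite in_itv /= => /andP[x0 _].
  by rewrite derive1E (@derive_val _ _ _ _ _ _ _ (hd x x0)).
rewrite EFinB -(continuous_FTC2 c0 cf' Hoo F'E).
rewrite integralE.
have mD : measurable (`[0%R, c] : set R) by exact: measurable_itv.
have mf' : measurable_fun (`[0%R, c] : set R) f'.
  exact: measurable_realfun.subspace_continuous_measurable_fun.
rewrite -[X in (_ <= X)%E]sube0; apply: leeB; last first.
  by apply: integral_ge0 => x _; exact: funeneg_ge0.
apply: ge0_le_integral => //.
- by apply: measurable_realfun.measurable_funepos; apply/measurable_realfun.measurable_EFinP.
- by apply/measurable_realfun.measurable_EFinP.
- move=> x /=; rewrite in_itv /= => hx.
  rewrite funeposE ge_max lee_fin hle // andTb lee_fin h0 //.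
Qed.
End FTC.

Theorem lemma5p4 (R : realType) (m : nat) (lam A p : 'I_m -> R)
  (f f' : R -> R) (g : 'I_m -> R -> R) :
  (0 < m)%N ->
  (forall k, 0 < lam k <= 1) ->
  (forall k, 0 <= A k) ->
  (forall k, 1 <= p k) ->
  C1_halfline f f' ->
  (forall t, 0 <= t -> 0 <= f t) ->
  (forall k, measurable_fun (`[0, +oo[ : set R) (g k)) ->
  (forall k t, 0 <= t -> (LpNorm0t (p k) (g k) t < +oo)%E) ->
  (forall k t, 0 <= t -> 0 <= g k t) ->
  (forall t, 0 <= t -> f' t <= \sum_(k < m) f t `^ (1 - lam k) * g k t) ->
  (forall k, exists C : R, forall t, 0 <= t ->
      (LpNorm0t (p k) (g k) t <= (C * jbr t `^ A k)%:E)%E) ->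
  exists C : R, forall t, 0 <= t ->
    f t <= C * jbr t `^ (\big[Num.max/0]_(k < m) ((A k + inv_conj (p k)) / lam k)).
Proof.
move=> m0 hl hA hp Hf f0 mg gfin g0 hder hC.
have [Cf hCf] := boolp.choice hC.
pose Cp k := Num.max (Cf k) 0.
pose e k := A k + inv_conj (p k).
pose G := \big[Num.max/0]_(k < m) ((A k + inv_conj (p k)) / lam k).
exists (m.+1%:R * f 0 + \sum_(k < m) (m.+1%:R * Cp k) `^ (lam k)^-1).
move=> t t0.
pose J := jbr t.
have J1 : 1 <= J.
  rewrite /J /jbr -{1}sqrtr1 ler_sqrt; last by rewrite addr_ge0 // exprn_ge0.
  by rewrite lerDl exprn_ge0.
have J0 : 0 < J by apply: lt_le_trans J1.
have tJ : t <= J.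
  rewrite /J /jbr ger0_norm // -{1}(ger0_norm t0) -sqrtr_sqr ler_sqrt.
    by rewrite lerDr.
  by rewrite addr_ge0 // exprn_ge0.
have Hd := @C1_oy R f f' Hf.
have cf : {within `[0, t], continuous f}.
  apply: continuous_subspaceW (derivable_oy_Rcontinuous_within_itvcy Hd).
  by move=> x /=; rewrite !in_itv /= => /andP[-> _].
have [c ct hmax] := EVT_max t0 cf.
move: ct; rewrite in_itv /= => /andP[c0 ct].
pose X := f c.
have X0 : 0 <= X by apply: f0.
have ft : f t <= X by apply: hmax; rewrite in_itv /= t0 lexx.
pose b k := Cp k * J `^ e k.
have Cp0 : forall k, 0 <= Cp k by move=> k; rewrite le_max lexx orbT.
have hb : forall k, 0 <= b k by move=> k; rewrite mulr_ge0 // powR_ge0.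
have G0 : 0 <= G by exact: bigmax_ge_id.
have gb : forall k, (\int[lebesgue_measure]_(x in `[0%R, c]) (g k x)%:E <= (b k)%:E)%E.
  move=> k.
  have mgt : measurable_fun (`[0%R, t] : set R) (g k).
    apply: measurable_funS (mg k) => //.
    by move=> x /=; rewrite !in_itv /= => /andP[-> _].
  apply: (@le_trans _ _ (\int[lebesgue_measure]_(x in `[0%R, t]) (g k x)%:E)%E).
    apply: ge0_subset_integral => //; try exact: measurable_itv.
    - by apply/measurable_realfun.measurable_EFinP.
    - by move=> x /=; rewrite in_itv /= => /andP[x0 _]; rewrite lee_fin g0.
    - by move=> x /=; rewrite !in_itv /= => /andP[-> /le_trans]; apply.
  apply: le_trans (@int_le_holder R (g k) (p k) t (hp k) t0 (mg k) (g0 k)) _.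
  have ic0 : 0 <= inv_conj (p k).
    by rewrite /inv_conj subr_ge0 invf_le1 // (lt_le_trans ltr01 (hp k)).
  apply: le_trans (lee_wpmul2l _ (hCf k t t0)) _; first by rewrite lee_fin powR_ge0.
  rewrite -EFinM lee_fin /b /e.
  apply: (@le_trans _ _ (J `^ inv_conj (p k) * (Cp k * J `^ A k))).
    apply: (@le_trans _ _ (t `^ inv_conj (p k) * (Cp k * J `^ A k))).
      apply: ler_wpM2l; first exact: powR_ge0.
      by apply: ler_wpM2r; rewrite ?powR_ge0 // le_max lexx.
    apply: ler_wpM2r; first by rewrite mulr_ge0 ?powR_ge0.
    by apply: (@ge0_ler_powR R); rewrite ?nnegrE // ltW.
  have eq : J `^ (A k + inv_conj (p k)) = J `^ inv_conj (p k) * J `^ A k.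
    by rewrite addrC powRD // (gt_eqF J0) implybT.
  by rewrite eq mulrCA.
have key : X <= f 0 + \sum_(k < m) X `^ (1 - lam k) * b k.
  move: c0; rewrite le_eqVlt => /predU1P[c0|cpos].
    rewrite /X -c0 -[leLHS]addr0 lerD2l.
    by apply: sumr_ge0 => k _; rewrite mulr_ge0 ?powR_ge0.
  rewrite -lerBlDl -lee_fin.
  have mD : measurable (`[0%R, c] : set R) by exact: measurable_itv.
  have mgc : forall k, measurable_fun (`[0%R, c] : set R) (g k).
    move=> k; apply: measurable_funS (mg k) => //.
    by move=> x /=; rewrite !in_itv /= => /andP[-> _].
  pose h x := \sum_(k < m) X `^ (1 - lam k) * g k x.
  have mh : measurable_fun (`[0, c] : set R) h.
    apply: measurable_sum => k; apply: measurable_realfun.measurable_funM => //.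
  have h0 : forall x, 0 <= x <= c -> 0 <= h x.
    move=> x /andP[x0 _]; apply: sumr_ge0 => k _; rewrite mulr_ge0 ?powR_ge0 ?g0 //.
  have hle : forall x, 0 <= x <= c -> f' x <= h x.
    move=> x /andP[x0 xc]; apply: le_trans (hder x x0) _.
    apply: ler_sum => k _; apply: ler_wpM2r; first exact: g0.
    have /andP[l0 l1] := hl k.
    have fX : f x <= X by apply: hmax; rewrite in_itv /= x0 /=; exact: le_trans xc ct.
    apply: (@ge0_ler_powR R); rewrite ?nnegrE ?subr_ge0 ?f0 //.
    exact: ltW.
  apply: le_trans (@ftc_le R f f' h c cpos Hf mh h0 hle) _.
  rewrite /h.
  under eq_integral do rewrite -sumEFin.
  rewrite ge0_integral_sum //; first last.
  - by move=> k x /=; rewrite in_itv /= => /andP[x0 _]; rewrite lee_fin mulr_ge0 ?powR_ge0 ?g0.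
  - move=> k; apply/measurable_realfun.measurable_EFinP.
    by apply: measurable_realfun.measurable_funM => //; exact: mgc.
  rewrite -sumEFin; apply: lee_sum => k _.
  under eq_integral do rewrite EFinM.
  rewrite ge0_integralZl_EFin //.
  - rewrite EFinM; apply: lee_wpmul2l; [by rewrite lee_fin powR_ge0 | exact: gb].
  - by move=> x /=; rewrite in_itv /= => /andP[x0 _]; rewrite lee_fin g0.
  - by apply/measurable_realfun.measurable_EFinP; exact: mgc.
  - exact: powR_ge0.
have HX := @alg_bound R m lam b X (f 0) hl hb X0 (f0 0 (lexx 0)) key.
apply: (le_trans ft); apply: (le_trans HX).
rewrite mulrDl mulr_suml.
have JG1 : 1 <= J `^ G by rewrite -(powRr0 J); apply: ler_powR.
apply: lerD.
  rewrite -{1}[_ * f 0]mulr1; apply: ler_wpM2l => //.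
  by rewrite mulr_ge0 // f0.
apply: ler_sum => k _.
rewrite /b mulrA powRM ?mulr_ge0 ?powR_ge0 // -powRrM.
apply: ler_wpM2l; first exact: powR_ge0.
apply: ler_powR => //.
exact: le_bigmax.
Qed.
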